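(* Let $L=[l_{ij}]\in\mathbb R^{m\times m}$ be symmetric with all row sums equal to zero and with $0$ a simple eigenvalue. Let $r\in[0,\pi/2)$ and let $\tilde L^r$ be as defined in the context. Let $\chi_1$ and $\chi_2$ be the smallest eigenvalues of $L$ and of $\tilde L^r$, respectively, on the subspace $\{x\in\mathbb R^m: \mathbf 1^\top x=0\}$ (the orthogonal complement of $\mathbf 1=(1,\dots,1)^\top$). Then $\chi_1\ge\chi_2$.
   Context: For a real symmetric $m\times m$ matrix $M=[m_{ij}]$ with zero row sums and $r\in[0,\pi/2)$, the matrix $\tilde M^r=[\tilde m^r_{ij}]$ is defined by: for $i\ne j$, $\tilde m^r_{ij}=m_{ij}\cos r$ if $m_{ij}\le 0$ and $\tilde m^r_{ij}=m_{ij}$ if $m_{ij}>0$; and $\tilde m^r_{ii}=-\sum_{k\ne i}\tilde m^r_{ik}$. Both $L$ and $\tilde L^r$ are symmetric and leave $\{x:\mathbf 1^\top x=0\}$ invariant. *)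

(* Defs.v *)
From Stdlib Require Import Reals Lra.
Open Scope R_scope.

(* Vectors in R^m are functions nat -> R (only indices < m matter);
   m x m matrices are functions nat -> nat -> R. *)

Fixpoint rsum (n : nat) (f : nat -> R) : R :=
  match n with
  | O => 0
  | S k => rsum k f + f k
  end.

Definition symmetric (m : nat) (M : nat -> nat -> R) : Prop :=
  forall i j, (i < m)%nat -> (j < m)%nat -> M i j = M j i.

Definition zero_row_sums (m : nat) (M : nat -> nat -> R) : Prop :=
  forall i, (i < m)%nat -> rsum m (fun j => M i j) = 0.

Definition mulv (m : nat) (M : nat -> nat -> R) (x : nat -> R) : nat -> R :=
  fun i => rsum m (fun j => M i j * x j).

Definition nonzero_vec (m : nat) (x : nat -> R) : Prop :=
  exists i, (i < m)%nat /\ x i <> 0.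

Definition eig_eq (m : nat) (M : nat -> nat -> R) (lam : R) (x : nat -> R) : Prop :=
  forall i, (i < m)%nat -> mulv m M x i = lam * x i.

Definition is_eigenpair (m : nat) (M : nat -> nat -> R) (lam : R) (x : nat -> R) : Prop :=
  nonzero_vec m x /\ eig_eq m M lam x.

(* lam is a simple eigenvalue of the (symmetric) matrix M: its eigenspace is
   one-dimensional (for symmetric matrices geometric = algebraic multiplicity). *)
Definition simple_eigenvalue (m : nat) (M : nat -> nat -> R) (lam : R) : Prop :=
  exists v, is_eigenpair m M lam v /\
    forall x, eig_eq m M lam x -> exists c, forall i, (i < m)%nat -> x i = c * v i.

Definition in_perp1 (m : nat) (x : nat -> R) : Prop := rsum m x = 0.

Definition eigenvalue_on_perp1 (m : nat) (M : nat -> nat -> R) (lam : R) : Prop :=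
  exists x, in_perp1 m x /\ is_eigenpair m M lam x.

Definition smallest_eigenvalue_on_perp1 (m : nat) (M : nat -> nat -> R) (chi : R) : Prop :=
  eigenvalue_on_perp1 m M chi /\
  forall mu, eigenvalue_on_perp1 m M mu -> chi <= mu.

Definition tilde_off (M : nat -> nat -> R) (r : R) (i j : nat) : R :=
  if Rle_dec (M i j) 0 then M i j * cos r else M i j.

Definition tilde (m : nat) (M : nat -> nat -> R) (r : R) : nat -> nat -> R :=
  fun i j =>
    if Nat.eqb i j
    then - rsum m (fun k => if Nat.eqb k i then 0 else tilde_off M r i k)
    else tilde_off M r i j.

(* Main.v *)
From Pilot Require Import Defs.
From Stdlib Require Import Reals Lra Lia Classical.
Open Scope R_scope.

Lemma rsum_ext n f g : (forall i, (i < n)%nat -> f i = g i) -> rsum n f = rsum n g.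
Proof. induction n; simpl; intros H; auto. rewrite IHn by (intros; apply H; lia). rewrite H by lia. auto. Qed.

Lemma rsum_add n f g : rsum n (fun i => f i + g i) = rsum n f + rsum n g.
Proof. induction n; simpl; [lra|rewrite IHn; lra]. Qed.

Lemma rsum_scal n c f : rsum n (fun i => c * f i) = c * rsum n f.
Proof. induction n; simpl; [lra|rewrite IHn; lra]. Qed.

Lemma rsum_zero n f : (forall i, (i < n)%nat -> f i = 0) -> rsum n f = 0.
Proof. intros H. rewrite (rsum_ext n f (fun _ => 0)) by auto. induction n; simpl; auto. rewrite IHn by (intros; apply H; lia). lra. Qed.

Lemma rsum_swap n k (f : nat -> nat -> R) :
  rsum n (fun i => rsum k (fun j => f i j)) = rsum k (fun j => rsum n (fun i => f i j)).
Proof.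
induction n; simpl.
- symmetry; apply rsum_zero; auto.
- rewrite IHn. rewrite <- rsum_add. reflexivity.
Qed.

Lemma rsum_le n f g : (forall i, (i < n)%nat -> f i <= g i) -> rsum n f <= rsum n g.
Proof. induction n; simpl; intros H; [lra|]. assert (H1 := H n (Nat.lt_succ_diag_r n)). assert (rsum n f <= rsum n g) by (apply IHn; intros; apply H; lia). lra. Qed.

Lemma rsum_split n f i : (i < n)%nat ->
  rsum n f = f i + rsum n (fun k => if Nat.eqb k i then 0 else f k).
Proof.
induction n; intros Hi; [lia|]. simpl.
destruct (Nat.eq_dec i n) as [->|Hne].
- rewrite Nat.eqb_refl. rewrite (rsum_ext n (fun k => if Nat.eqb k n then 0 else f k) f).
  + lra.
  + intros j Hj. destruct (Nat.eqb_spec j n); [lia|auto].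
- rewrite (IHn ltac:(lia)). destruct (Nat.eqb_spec n i); [lia|lra].
Qed.

Lemma rsum_nonneg n f : (forall i, (i < n)%nat -> 0 <= f i) -> 0 <= rsum n f.
Proof. intros H. rewrite <- (rsum_zero n (fun _ => 0)) by auto. apply rsum_le; auto. Qed.

Lemma rsum_nonpos n f : (forall i, (i < n)%nat -> f i <= 0) -> rsum n f <= 0.
Proof. induction n; simpl; intros H; [lra|]. assert (H1 := H n (Nat.lt_succ_diag_r n)). assert (rsum n f <= 0) by (apply IHn; intros; apply H; lia). lra. Qed.

Lemma rsum_ge_term n f i : (forall i, (i < n)%nat -> 0 <= f i) -> (i < n)%nat -> f i <= rsum n f.
Proof.
intros H Hi. rewrite (rsum_split n f i Hi).
assert (0 <= rsum n (fun k => if Nat.eqb k i then 0 else f k)).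
{ apply rsum_nonneg. intros k Hk. destruct (Nat.eqb k i); [lra|auto]. }
lra.
Qed.

Lemma tilde_sym m L r : symmetric m L -> symmetric m (tilde m L r).
Proof.
intros HL i j Hi Hj. unfold tilde.
destruct (Nat.eqb_spec i j) as [->|Hne].
- rewrite Nat.eqb_refl. reflexivity.

- destruct (Nat.eqb_spec j i); [lia|]. unfold tilde_off. rewrite (HL i j Hi Hj). reflexivity.
Qed.

Lemma tilde_rows m L r : zero_row_sums m (tilde m L r).
Proof.
intros i Hi. rewrite (rsum_split m _ i Hi). unfold tilde at 1. rewrite Nat.eqb_refl.
rewrite (rsum_ext m (fun k => if Nat.eqb k i then 0 else tilde m L r i k)
  (fun k => if Nat.eqb k i then 0 else tilde_off L r i k)).
- lra.
- intros k Hk. unfold tilde. destruct (Nat.eqb_spec k i); auto.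
  destruct (Nat.eqb_spec i k); [lia|auto].
Qed.

Lemma diff_offdiag m L r i j : i <> j -> L i j - tilde m L r i j <= 0.
Proof.
intros Hne. unfold tilde. destruct (Nat.eqb_spec i j); [lia|]. unfold tilde_off.
destruct (Rle_dec (L i j) 0).
- assert (cos r <= 1) by apply COS_bound. nra.
- lra.
Qed.

Definition qf (m : nat) (M : nat -> nat -> R) (x : nat -> R) : R :=
  rsum m (fun i => x i * mulv m M x i).
Definition nrm (m : nat) (x : nat -> R) : R := rsum m (fun i => x i * x i).

Lemma psd m D x : symmetric m D -> zero_row_sums m D ->
  (forall i j, (i < m)%nat -> (j < m)%nat -> i <> j -> D i j <= 0) -> 0 <= qf m D x.
Proof.
intros Hs Hr Hoff.
set (S := rsum m (fun i => rsum m (fun j => D i j * ((x i - x j) * (x i - x j))))).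
assert (HS : S <= 0).
{ apply rsum_nonpos. intros i Hi.
  apply rsum_nonpos. intros j Hj. cbv beta. destruct (Nat.eq_dec i j) as [->|Hne].
  - replace (x j - x j) with 0 by ring. lra.
  - assert (H := Hoff i j Hi Hj Hne). assert (0 <= (- D i j) * ((x i - x j) * (x i - x j))) by (apply Rmult_le_pos; [lra | apply Rle_0_sqr]). lra. }
assert (HE : S = -2 * qf m D x).
{ unfold S, qf.
  rewrite (rsum_ext m _ (fun i => x i * x i * rsum m (fun j => D i j) + (-2) * (x i * mulv m D x i)
                 + rsum m (fun j => D i j * (x j * x j)))).
  2:{ intros i Hi. unfold mulv. rewrite <- rsum_scal, <- rsum_scal, <- rsum_scal.
      rewrite <- rsum_add, <- rsum_add. apply rsum_ext. intros. ring. }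
  rewrite rsum_add, rsum_add, rsum_scal.
  rewrite (rsum_zero m (fun i => x i * x i * rsum m (fun j => D i j))).
  2:{ intros i Hi. rewrite Hr by auto. ring. }
  rewrite rsum_swap.
  rewrite (rsum_zero m (fun j => rsum m (fun i => D i j * (x j * x j)))).
  2:{ intros j Hj. rewrite (rsum_ext m _ (fun i => (x j * x j) * D j i)).
      - rewrite rsum_scal, Hr by auto. ring.
      - intros i Hi. rewrite (Hs i j Hi Hj). ring. }
  ring. }
lra.
Qed.

Lemma rsum_sub n f g : rsum n (fun i => f i - g i) = rsum n f - rsum n g.
Proof. induction n; simpl; [lra|rewrite IHn; lra]. Qed.

Lemma qf_sub m L T x : qf m L x - qf m T x = qf m (fun i j => L i j - T i j) x.
Proof.
unfold qf. rewrite <- rsum_sub. apply rsum_ext. intros i Hi.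
unfold mulv. rewrite (rsum_ext m (fun j => (L i j - T i j) * x j) (fun j => L i j * x j - T i j * x j)) by (intros; ring).
rewrite rsum_sub. ring.
Qed.

Lemma col_sum m T z : symmetric m T -> zero_row_sums m T -> rsum m (mulv m T z) = 0.
Proof.
intros Hs Hr. unfold mulv. rewrite rsum_swap. apply rsum_zero. intros j Hj.
rewrite (rsum_ext m _ (fun i => z j * T j i)).
- rewrite rsum_scal, Hr by auto. ring.
- intros i Hi. rewrite (Hs i j Hi Hj). ring.
Qed.

Lemma bil_sym m T y w : symmetric m T ->
  rsum m (fun i => y i * mulv m T w i) = rsum m (fun i => w i * mulv m T y i).
Proof.
intros Hs. unfold mulv.
rewrite (rsum_ext m (fun i => y i * rsum m (fun j => T i j * w j)) (fun i => rsum m (fun j => y i * T i j * w j))).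
2:{ intros. rewrite <- rsum_scal. apply rsum_ext. intros. ring. }
rewrite rsum_swap. apply rsum_ext. intros j Hj. rewrite <- rsum_scal. apply rsum_ext. intros i Hi.
rewrite (Hs i j Hi Hj). ring.
Qed.

Lemma mulv_lin m T y w t i :
  mulv m T (fun k => y k + t * w k) i = mulv m T y i + t * mulv m T w i.
Proof. unfold mulv. rewrite <- rsum_scal, <- rsum_add. apply rsum_ext. intros. ring. Qed.

Lemma mulv_scal m T c z i : mulv m T (fun k => c * z k) i = c * mulv m T z i.
Proof. unfold mulv. rewrite <- rsum_scal. apply rsum_ext. intros. ring. Qed.

Inductive polyfun : ((nat -> R) -> R) -> Prop :=
| pf_const c : polyfun (fun _ => c)
| pf_coord i : polyfun (fun z => z i)
| pf_add f g : polyfun f -> polyfun g -> polyfun (fun z => Rplus (f z) (g z))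
| pf_mul f g : polyfun f -> polyfun g -> polyfun (fun z => Rmult (f z) (g z))
| pf_ext f g : polyfun f -> (forall z, f z = g z) -> polyfun g.

Definition box (m : nat) (z : nat -> R) : Prop :=
  forall i, (i < m)%nat -> Rle (-1) (z i) /\ Rle (z i) 1.

Lemma pf_rsum n (h : nat -> (nat -> R) -> R) :
  (forall j, polyfun (h j)) -> polyfun (fun z => rsum n (fun j => h j z)).
Proof.
intros H. induction n; simpl.
- apply pf_const.
- apply pf_add; auto.
Qed.

Lemma pf_qf m T : polyfun (qf m T).
Proof.
unfold qf, mulv. apply (pf_rsum m (fun i z => z i * rsum m (fun j => T i j * z j))).
intros i. apply pf_mul; [apply pf_coord|].
apply (pf_rsum m (fun j z => T i j * z j)). intros j. apply pf_mul; [apply pf_const|apply pf_coord].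
Qed.

Lemma pf_nrm m : polyfun (nrm m).
Proof.
unfold nrm. apply (pf_rsum m (fun i z => z i * z i)). intros i. apply pf_mul; apply pf_coord.
Qed.

Lemma pf_sum m : polyfun (fun z => rsum m z).
Proof.
apply (pf_ext (fun z => rsum m (fun j => z j))); [apply (pf_rsum m (fun j z => z j)); intros; apply pf_coord|].
intros z. reflexivity.
Qed.

Definition MinExists : Prop := forall m (f g1 g2 : (nat -> R) -> R),
  polyfun f -> polyfun g1 -> polyfun g2 ->
  (forall z z', (forall i, (i < m)%nat -> z i = z' i) ->
     f z = f z' /\ g1 z = g1 z' /\ g2 z = g2 z') ->
  (exists z, box m z /\ g1 z = 0 /\ g2 z = 1) ->
  exists y, box m y /\ g1 y = 0 /\ g2 y = 1 /\
    forall z, box m z -> g1 z = 0 -> g2 z = 1 -> Rle (f y) (f z).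

Lemma nrm_pos m x : nonzero_vec m x -> 0 < nrm m x.
Proof.
intros [i [Hi Hx]]. assert (x i * x i <= nrm m x).
{ apply (rsum_ge_term m (fun i => x i * x i)); auto. intros; nra. }
assert (0 < x i * x i) by nra. lra.
Qed.

Lemma nrm_zero m x : nrm m x = 0 -> forall i, (i < m)%nat -> x i = 0.
Proof.
intros H i Hi. assert (x i * x i <= nrm m x).
{ apply (rsum_ge_term m (fun i => x i * x i)); auto. intros; nra. }
nra.
Qed.

Lemma box_of_nrm m x : nrm m x = 1 -> box m x.
Proof.
intros H i Hi. assert (x i * x i <= nrm m x).
{ apply (rsum_ge_term m (fun i => x i * x i)); auto. intros; nra. }
split; nra.
Qed.

Lemma inv_sqrt_sq a : 0 < a -> / sqrt a * / sqrt a * a = 1.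
Proof.
intros Ha. assert (H1 : 0 < sqrt a) by (apply sqrt_lt_R0; auto).
assert (H2 : sqrt a * sqrt a = a) by (apply sqrt_sqrt; lra).
rewrite <- H2 at 3. field. lra.
Qed.

Lemma rayleigh (min_exists : MinExists) m T : symmetric m T -> zero_row_sums m T ->
  forall x, in_perp1 m x -> nonzero_vec m x ->
  exists lam, eigenvalue_on_perp1 m T lam /\
    forall z, in_perp1 m z -> lam * nrm m z <= qf m T z.
Proof.
intros Hs Hr x Hx Hnz.
assert (loc : forall z z', (forall i, (i < m)%nat -> z i = z' i) ->
   qf m T z = qf m T z' /\ rsum m z = rsum m z' /\ nrm m z = nrm m z').
{ intros z z' E. unfold qf, nrm, mulv. split; [|split].
  - apply rsum_ext. intros i Hi. rewrite E by auto. f_equal. apply rsum_ext. intros j Hj. rewrite E; auto.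
  - apply rsum_ext; auto.
  - apply rsum_ext. intros i Hi. rewrite E; auto. }
set (s := / sqrt (nrm m x)).
assert (Hp := nrm_pos m x Hnz).
assert (Hsq : 0 < sqrt (nrm m x)) by (apply sqrt_lt_R0; auto).
assert (Hss : sqrt (nrm m x) * sqrt (nrm m x) = nrm m x) by (apply sqrt_sqrt; lra).
assert (Hnrm_scal : forall c z, nrm m (fun i => c * z i) = c * c * nrm m z).
{ intros c z. unfold nrm. rewrite <- rsum_scal. apply rsum_ext. intros; ring. }
assert (Hsum_scal : forall c z, rsum m (fun i => c * z i) = c * rsum m z) by (intros; apply rsum_scal).
assert (Hqf_scal : forall c z, qf m T (fun i => c * z i) = c * c * qf m T z).
{ intros c z. unfold qf. rewrite <- rsum_scal. apply rsum_ext. intros i Hi. rewrite mulv_scal. ring. }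
destruct (min_exists m (qf m T) (fun z => rsum m z) (nrm m) (pf_qf m T) (pf_sum m) (pf_nrm m) loc)
  as [y [By [Sy [Ny Hmin]]]].
{ exists (fun i => s * x i). split; [|split].
  - apply box_of_nrm. rewrite Hnrm_scal. unfold s. apply inv_sqrt_sq; auto.
  - rewrite Hsum_scal. unfold in_perp1 in Hx. rewrite Hx. ring.
  - rewrite Hnrm_scal. unfold s. apply inv_sqrt_sq; auto. }
set (lam := qf m T y).
assert (R1 : forall z, in_perp1 m z -> lam * nrm m z <= qf m T z).
{ intros z Hz. destruct (Req_dec (nrm m z) 0) as [H0|H0].
  - rewrite H0. unfold qf. rewrite rsum_zero.
    + lra.
    + intros i Hi. rewrite (nrm_zero m z H0 i Hi). ring.
  - assert (Hzp : 0 < nrm m z).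
    { assert (0 <= nrm m z) by (apply rsum_nonneg; intros; nra). lra. }
    assert (Hq : 0 < sqrt (nrm m z)) by (apply sqrt_lt_R0; auto).
    assert (Hqq : sqrt (nrm m z) * sqrt (nrm m z) = nrm m z) by (apply sqrt_sqrt; lra).
    set (c := / sqrt (nrm m z)).
    assert (Hn1 : nrm m (fun i => c * z i) = 1).
    { rewrite Hnrm_scal. unfold c. apply inv_sqrt_sq; auto. }
    assert (Hm := Hmin (fun i => c * z i) (box_of_nrm m _ Hn1)).
    rewrite Hsum_scal in Hm. unfold in_perp1 in Hz. rewrite Hz in Hm.
    assert (Hm' := Hm ltac:(ring) Hn1). rewrite Hqf_scal in Hm'. fold lam in Hm'.
    assert (HcN : c * c * nrm m z = 1) by (rewrite <- Hnrm_scal; exact Hn1).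
    assert (E : c * c * qf m T z * nrm m z = qf m T z).
    { replace (c * c * qf m T z * nrm m z) with ((c * c * nrm m z) * qf m T z) by ring.
      rewrite HcN. ring. }
    assert (0 <= (c * c * qf m T z - lam) * nrm m z) by (apply Rmult_le_pos; lra).
    lra. }
exists lam. split; [|exact R1].
set (w := fun i => mulv m T y i - lam * y i).
assert (Sw : rsum m w = 0).
{ unfold w. rewrite rsum_sub, rsum_scal, col_sum by auto. rewrite Sy. ring. }
assert (Hexp : forall t, qf m T (fun i => y i + t * w i) - lam * nrm m (fun i => y i + t * w i)
                 = 2 * t * nrm m w + t * t * (qf m T w - lam * nrm m w)).
{ intros t.
  assert (E1 : qf m T (fun i => y i + t * w i) =
     qf m T y + 2 * t * rsum m (fun i => w i * mulv m T y i) + t * t * qf m T w).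
  { unfold qf. rewrite (rsum_ext m _ (fun i => (y i * mulv m T y i + t * (y i * mulv m T w i))
        + (t * (w i * mulv m T y i) + (t * t) * (w i * mulv m T w i)))).
    2:{ intros i Hi. rewrite mulv_lin. ring. }
    rewrite rsum_add, rsum_add, rsum_add, !rsum_scal. rewrite (bil_sym m T y w Hs). ring. }
  assert (E2 : nrm m (fun i => y i + t * w i) =
     nrm m y + 2 * t * rsum m (fun i => w i * y i) + t * t * nrm m w).
  { unfold nrm. rewrite (rsum_ext m _ (fun i => (y i * y i + (2 * t) * (w i * y i)) + (t * t) * (w i * w i))).
    2:{ intros; ring. }
    rewrite rsum_add, rsum_add, !rsum_scal. ring. }
  assert (E3 : nrm m w = rsum m (fun i => w i * mulv m T y i) - lam * rsum m (fun i => w i * y i)).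
  { unfold nrm. rewrite <- rsum_scal, <- rsum_sub. apply rsum_ext. intros i Hi. unfold w at 2. ring. }
  rewrite E1, E2, E3, Ny. fold lam. ring. }
assert (Hw0 : nrm m w = 0).
{ set (c := qf m T w - lam * nrm m w).
  set (a := nrm m w).
  assert (Ha : 0 <= a) by (apply rsum_nonneg; intros; nra).
  set (t := - a / (Rabs c + 1)).
  assert (Hpos := R1 (fun i => y i + t * w i)).
  assert (Hin : in_perp1 m (fun i => y i + t * w i)).
  { unfold in_perp1. rewrite rsum_add, rsum_scal, Sy, Sw. ring. }
  specialize (Hpos Hin).
  assert (Hq : 0 <= 2 * t * a + t * t * c).
  { unfold a, c. rewrite <- Hexp. lra. }
  assert (Hc1 : 0 < Rabs c + 1) by (assert (0 <= Rabs c) by apply Rabs_pos; lra).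
  assert (Hcb : c <= Rabs c) by apply RRle_abs.
  assert (Ht : t * (Rabs c + 1) = - a) by (unfold t; field; lra).
  assert (0 <= (2 * t * a + t * t * c) * ((Rabs c + 1) * (Rabs c + 1))) by (apply Rmult_le_pos; nra).
  assert (E : (2 * t * a + t * t * c) * ((Rabs c + 1) * (Rabs c + 1)) = a * a * (c - 2 * (Rabs c + 1))).
  { replace ((2 * t * a + t * t * c) * ((Rabs c + 1) * (Rabs c + 1)))
      with (2 * (t * (Rabs c + 1)) * a * (Rabs c + 1) + (t * (Rabs c + 1)) * (t * (Rabs c + 1)) * c) by ring.
    rewrite Ht. ring. }
  nra. }
exists y. split; [exact Sy|]. split.
- apply NNPP. intros Hn. assert (nrm m y = 0).
  { unfold nrm. apply rsum_zero. intros i Hi.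
    destruct (Req_dec (y i) 0) as [->|Hne]; [ring|]. exfalso. apply Hn. exists i. auto. }
  lra.
- intros i Hi. assert (Hwi := nrm_zero m w Hw0 i Hi). unfold w in Hwi. lra.
Qed.

Lemma lemma2_aux (HM : MinExists) (m : nat) (L : nat -> nat -> R) (r chi1 chi2 : R) :
  symmetric m L ->
  zero_row_sums m L ->
  simple_eigenvalue m L 0 ->
  0 <= r < PI / 2 ->
  smallest_eigenvalue_on_perp1 m L chi1 ->
  smallest_eigenvalue_on_perp1 m (tilde m L r) chi2 ->
  chi1 >= chi2.
Proof.
intros HLs HLr _ _ [[x [Hx [Hnz Heig]]] _] [_ Hmin2].
assert (HTs := tilde_sym m L r HLs).
assert (HTr := tilde_rows m L r).
destruct (rayleigh HM m (tilde m L r) HTs HTr x Hx Hnz) as [lam [Hlam R1]].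
assert (H2 := Hmin2 lam Hlam).
assert (Hq1 : qf m L x = chi1 * nrm m x).
{ unfold qf, nrm. rewrite <- rsum_scal. apply rsum_ext. intros i Hi. rewrite Heig by auto. ring. }
assert (Hd : 0 <= qf m L x - qf m (tilde m L r) x).
{ rewrite qf_sub. apply psd.
  - intros i j Hi Hj. rewrite (HLs i j Hi Hj), (HTs i j Hi Hj). reflexivity.
  - intros i Hi. unfold zero_row_sums in *.
    rewrite (rsum_sub m (fun j => L i j) (fun j => tilde m L r i j)), HLr, HTr by auto. ring.
  - intros i j _ _ Hne. apply diff_offdiag; auto. }
assert (Hr1 := R1 x Hx).
assert (Hp := nrm_pos m x Hnz).
nra.
Qed.

From mathcomp Require Import all_boot all_order all_algebra.
From mathcomp Require Import all_classical all_reals all_analysis.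
From mathcomp Require Import Rstruct Rstruct_topology.
Import Order.TTheory GRing.Theory Num.Theory.
Import numFieldNormedType.Exports.

Definition toF (m : nat) (v : 'rV[R]_m) (i : nat) : R :=
  match @insub nat (fun k => (k < m)%N) 'I_m i with
  | Some j => v ord0 j
  | None => 0%R
  end.

Arguments toF {m}.

Lemma polyfun_cont m f : polyfun f -> continuous (fun v : 'rV[R]_m => f (toF v)).
Proof.
elim => {f} [c|i|f g _ Hf _ Hg|f g _ Hf _ Hg|f g _ Hf Hfg].
- exact: cst_continuous.
- rewrite /toF; case: insubP => [j _ _|_].
  + exact: coord_continuous.
  + exact: cst_continuous.
- move=> v; have H := (@continuousD R R^o _ _ _ v (Hf v) (Hg v)). exact: H.
- by move=> v; exact: (continuousM (Hf v) (Hg v)).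
- have -> : (fun v : 'rV[R]_m => g (toF v)) = (fun v => f (toF v)).
    by apply: funext => v; rewrite Hfg.
  exact: Hf.
Qed.

Lemma toF_ord m (v : 'rV[R]_m) (j : 'I_m) : toF v j = v ord0 j.
Proof.
rewrite /toF; case: insubP => [k _ /val_inj -> //|]; by rewrite ltn_ord.
Qed.

Lemma toF_row m (z : nat -> R) i : (i < m)%coq_nat -> toF (\row_(j < m) z j)%R i = z i.
Proof.
move=> /ssrnat.ltP H; rewrite (_ : i = Ordinal H) // toF_ord mxE //.
Qed.

Arguments toF_ord {m}.
Arguments toF_row {m}.

Lemma min_exists_ok : MinExists.
Proof.
move=> m f g1 g2 pf pg1 pg2 loc [z0 [bz0 [g1z0 g2z0]]].
pose A := [set v : 'rV[R]_m | box m (toF v) /\ g1 (toF v) = 0%R /\ g2 (toF v) = 1%R]%classic.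
pose B := [set v : 'rV[R]_m | forall i, `[(-1)%R, 1%R]%classic (v ord0 i)]%classic.
pose C := ((fun v : 'rV[R]_m => g1 (toF v)) @^-1` [set 0%R] `&`
          (fun v : 'rV[R]_m => g2 (toF v)) @^-1` [set 1%R])%classic.
have AE : A = (B `&` C)%classic.
  apply/seteqP; split => v /=.
  - move=> [bv [h1 h2]]; split; last by split.
    move=> i; have [] := bv i (ssrnat.ltP (ltn_ord i)); rewrite toF_ord => /RleP a /RleP b.
    by rewrite /= in_itv /= a b.
  - move=> [Bv [h1 h2]]; split; last by split.
    move=> i /ssrnat.ltP Hi; have := Bv (Ordinal Hi); rewrite -(toF_ord v (Ordinal Hi)) /=.
    by rewrite in_itv /= => /andP [/RleP a /RleP b].
have cA : compact A.
  rewrite AE; apply: compact_closedI.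
    apply: (@rV_compact R m (fun=> (`[(-1)%R, 1%R]%classic : set R))) => _.
    exact: segment_compact.
  apply: closedI; apply: preimage_closed.
  - move=> v _; have H := polyfun_cont m g1 pg1 v; exact H.
  - exact: closed_eq.
  - move=> v _; have H := polyfun_cont m g2 pg2 v; exact H.
  - exact: closed_eq.
have A0 : (A !=set0)%classic.
  exists (\row_(j < m) z0 j)%R; rewrite /A /=.
  have [e1 [e2 e3]] := loc (toF (\row_(j < m) z0 j)%R) z0 (toF_row z0).
  rewrite e2 e3; split => //.
  move=> i Hi; rewrite toF_row //; exact: bz0.
have [c cinA cmin] := @EVT_min_rV R m (fun v => f (toF v)) A A0 cA
   (continuous_subspaceT (polyfun_cont m f pf)).
move: cinA; rewrite inE => -[bc [g1c g2c]].
exists (toF c); split => //; split => //; split => //.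
move=> z bz g1z g2z.
have [e1 [e2 e3]] := loc (toF (\row_(j < m) z j)%R) z (toF_row z).
rewrite -e1; apply/RleP; apply: cmin; rewrite inE /A /=; rewrite e2 e3; split => //.
move=> i Hi; rewrite toF_row //; exact: bz.
Qed.

Import Pilot.Defs.
Open Scope R_scope.

Theorem lemma2 (m : nat) (L : nat -> nat -> R) (r chi1 chi2 : R) :
  symmetric m L ->
  zero_row_sums m L ->
  simple_eigenvalue m L 0 ->
  0 <= r < PI / 2 ->
  smallest_eigenvalue_on_perp1 m L chi1 ->
  smallest_eigenvalue_on_perp1 m (tilde m L r) chi2 ->
  chi1 >= chi2.
Proof. exact (lemma2_aux min_exists_ok m L r chi1 chi2). Qed.
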